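(* Let $D=((a_n),(b_n))$ be an almost periodic divisor with a regular indexing. Then for every sequence $(h_k)\subset\mathbb{C}$ there exist a subsequence $(h'_k)$, a divisor $\widetilde D=((\tilde a_n),(\tilde b_n))$ which is almost periodic with a regular indexing, and bijections $\tilde\sigma(k,\cdot):\mathbb{N}\to\mathbb{N}$ such that $$\sup_n|a_{\tilde\sigma(k,n)}+h'_k-\tilde a_n|\to0,\qquad \sup_n|b_{\tilde\sigma(k,n)}+h'_k-\tilde b_n|\to0\qquad (k\to\infty).$$
   Context: A divisor $D=((a_n)_{n\in\mathbb{N}},(b_n)_{n\in\mathbb{N}})$ consists of two sequences in $\mathbb{C}$ without finite accumulation points. It is almost periodic with a regular indexing if for every $\varepsilon>0$ there is $L$ such that every disc of radius $L$ contains a point $\tau$ for which some bijection $\sigma:\mathbb{N}\to\mathbb{N}$ satisfies $|a_n+\tau-a_{\sigma(n)}|<\varepsilon$ and $|b_n+\tau-b_{\sigma(n)}|<\varepsilon$ for all $n$. *)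

(* Defs.v *)
From Stdlib Require Import Reals.
Open Scope R_scope.

Definition Cpx : Type := (R * R)%type.
Definition Cadd (z w : Cpx) : Cpx := (fst z + fst w, snd z + snd w).
Definition Csub (z w : Cpx) : Cpx := (fst z - fst w, snd z - snd w).
Definition Cmod (z : Cpx) : R := sqrt (fst z * fst z + snd z * snd z).

Definition bijN (s : nat -> nat) : Prop :=
  exists g : nat -> nat, (forall n, g (s n) = n) /\ (forall n, s (g n) = n).

(* a sequence without finite accumulation points (counting multiplicity):
   every disc contains only finitely many terms, i.e. |a_n| -> infinity *)
Definition no_finite_accum (a : nat -> Cpx) : Prop :=
  forall M : R, exists N : nat, forall n : nat, (N <= n)%nat -> M < Cmod (a n).

Definition divisor (a b : nat -> Cpx) : Prop :=
  no_finite_accum a /\ no_finite_accum b.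

Definition ap_regular (a b : nat -> Cpx) : Prop :=
  forall eps : R, 0 < eps ->
    exists L : R, 0 < L /\
      forall c : Cpx, exists tau : Cpx, Cmod (Csub tau c) < L /\
        exists sigma : nat -> nat, bijN sigma /\
          forall n : nat,
            Cmod (Csub (Cadd (a n) tau) (a (sigma n))) < eps /\
            Cmod (Csub (Cadd (b n) tau) (b (sigma n))) < eps.

Definition strictly_increasing (phi : nat -> nat) : Prop :=
  forall i j : nat, (i < j)%nat -> (phi i < phi j)%nat.

(* Main.v *)
Require Import Defs.
From Stdlib Require Import Reals Lra Psatz Classical ClassicalEpsilon FunctionalExtensionality.
Open Scope R_scope.

Lemma Cmod_pos z : 0 <= Cmod z.
Proof. unfold Cmod; apply sqrt_pos. Qed.

Lemma Cmod_sq z : Cmod z * Cmod z = fst z * fst z + snd z * snd z.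
Proof. unfold Cmod; apply sqrt_sqrt; nra. Qed.

Lemma Cmod_tri z w : Cmod (Cadd z w) <= Cmod z + Cmod w.
Proof.
  destruct z as [z1 z2], w as [w1 w2].
  pose proof (Cmod_sq (z1,z2)) as Hz; pose proof (Cmod_sq (w1,w2)) as Hw.
  pose proof (Cmod_pos (z1,z2)); pose proof (Cmod_pos (w1,w2)).
  simpl in *. set (A := Cmod (z1,z2)) in *. set (B := Cmod (w1,w2)) in *.
  assert (HAB : z1*w1 + z2*w2 <= A*B).
  { destruct (Rle_dec (z1*w1+z2*w2) 0). nra.
    assert ((A*B)*(A*B) - (z1*w1+z2*w2)*(z1*w1+z2*w2) >= 0).
    { replace ((A*B)*(A*B)) with ((A*A)*(B*B)) by ring. rewrite Hz, Hw.
      pose proof (pow2_ge_0 (z1*w2 - z2*w1)). nra. }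
    assert (0 <= A*B) by (apply Rmult_le_pos; auto).
    destruct (Rle_dec (z1*w1+z2*w2) (A*B)); auto.
    exfalso. assert (0 < (z1*w1+z2*w2 - A*B)*(z1*w1+z2*w2 + A*B)) by (apply Rmult_lt_0_compat; lra).
    nra. }
  unfold Cmod, Cadd; simpl.
  rewrite <- (sqrt_square (A+B)) by lra.
  apply sqrt_le_1_alt. nra.
Qed.

Lemma Cmod_fst z : Rabs (fst z) <= Cmod z.
Proof.
  pose proof (Cmod_sq z); pose proof (Cmod_pos z).
  apply Rsqr_incr_0_var; [|auto]. unfold Rsqr. rewrite <- Rabs_mult, Rabs_right by nra. nra.
Qed.
Lemma Cmod_snd z : Rabs (snd z) <= Cmod z.
Proof.
  pose proof (Cmod_sq z); pose proof (Cmod_pos z).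
  apply Rsqr_incr_0_var; [|auto]. unfold Rsqr. rewrite <- Rabs_mult, Rabs_right by nra. nra.
Qed.
Lemma Cmod_le_sum z : Cmod z <= Rabs (fst z) + Rabs (snd z).
Proof.
  pose proof (Cmod_sq z); pose proof (Cmod_pos z).
  apply Rsqr_incr_0_var; [|pose proof (Rabs_pos (fst z)); pose proof (Rabs_pos (snd z)); lra].
  unfold Rsqr. rewrite H. 
  assert (fst z * fst z = Rabs (fst z) * Rabs (fst z)) by (rewrite <- Rabs_mult, Rabs_right; nra).
  assert (snd z * snd z = Rabs (snd z) * Rabs (snd z)) by (rewrite <- Rabs_mult, Rabs_right; nra).
  pose proof (Rabs_pos (fst z)); pose proof (Rabs_pos (snd z)). nra.
Qed.

Lemma Csub_sym x y : Cmod (Csub x y) = Cmod (Csub y x).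
Proof. destruct x, y; unfold Cmod, Csub; simpl. f_equal. ring. Qed.

Lemma Csub_tri x y z : Cmod (Csub x z) <= Cmod (Csub x y) + Cmod (Csub y z).
Proof.
  replace (Csub x z) with (Cadd (Csub x y) (Csub y z)). apply Cmod_tri.
  destruct x, y, z; unfold Cadd, Csub; simpl; f_equal; ring.
Qed.

Lemma Cmod_0 x : Cmod (Csub x x) = 0.
Proof. destruct x; unfold Cmod, Csub; simpl. replace ((r-r)*(r-r)+(r0-r0)*(r0-r0)) with 0 by ring. apply sqrt_0. Qed.

Definition shift (a : nat -> Cpx) (c : Cpx) : nat -> Cpx := fun n => Cadd (a n) c.

Definition cl (e : R) (a b a' b' : nat -> Cpx) : Prop :=
  exists s, bijN s /\ forall n, Cmod (Csub (a (s n)) (a' n)) <= e /\ Cmod (Csub (b (s n)) (b' n)) <= e.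

Lemma bij_id : bijN (fun n => n).
Proof. exists (fun n => n); auto. Qed.

Lemma bij_comp s t : bijN s -> bijN t -> bijN (fun n => s (t n)).
Proof. intros [g [H1 H2]] [g' [H3 H4]]. exists (fun n => g' (g n)); split; intros n.
  rewrite H1; auto. rewrite H4; auto. Qed.

Lemma cl_refl e a b : 0 <= e -> cl e a b a b.
Proof. intros. exists (fun n => n); split. apply bij_id. intros; rewrite !Cmod_0; lra. Qed.

Lemma cl_sym e a b a' b' : cl e a b a' b' -> cl e a' b' a b.
Proof.
  intros [s [[g [H1 H2]] H]]. exists g; split. exists s; auto.
  intros n. destruct (H (g n)) as [Ha Hb]. rewrite H2 in Ha, Hb.
  rewrite Csub_sym, (Csub_sym (b' _)). auto.
Qed.

Lemma cl_trans e f a b a' b' a'' b'' : cl e a b a' b' -> cl f a' b' a'' b'' -> cl (e+f) a b a'' b''.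
Proof.
  intros [s [Hs H]] [t [Ht H']]. exists (fun n => s (t n)); split. apply bij_comp; auto.
  intros n. destruct (H (t n)), (H' n). split.
  eapply Rle_trans. apply (Csub_tri _ (a' (t n))). lra.
  eapply Rle_trans. apply (Csub_tri _ (b' (t n))). lra.
Qed.

Lemma cl_mono e f a b a' b' : e <= f -> cl e a b a' b' -> cl f a b a' b'.
Proof. intros Hef [s [Hs H]]. exists s; split; auto. intros n; destruct (H n); split; lra. Qed.

Lemma Csub_shift x y c : Csub (Cadd x c) (Cadd y c) = Csub x y.
Proof. destruct x, y, c; unfold Csub, Cadd; simpl; f_equal; ring. Qed.

Lemma cl_shift e a b a' b' c : cl e a b a' b' -> cl e (shift a c) (shift b c) (shift a' c) (shift b' c).
Proof. intros [s [Hs H]]. exists s; split; auto. intros n; unfold shift; rewrite !Csub_shift; auto. Qed.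

Lemma cl_shift2 a b c c' : cl (Cmod (Csub c c')) (shift a c) (shift b c) (shift a c') (shift b c').
Proof.
  exists (fun n => n); split. apply bij_id. intros n; unfold shift.
  replace (Csub (Cadd (a n) c) (Cadd (a n) c')) with (Csub c c') by (destruct (a n), c, c'; unfold Csub, Cadd; simpl; f_equal; ring).
  replace (Csub (Cadd (b n) c) (Cadd (b n) c')) with (Csub c c') by (destruct (b n), c, c'; unfold Csub, Cadd; simpl; f_equal; ring).
  lra.
Qed.

Lemma shift_shift a c d : shift (shift a c) d = shift a (Cadd c d).
Proof. apply functional_extensionality; intros n; unfold shift; destruct (a n), c, d; unfold Cadd; simpl; f_equal; ring. Qed.

Lemma shift_comm a c d : shift (shift a c) d = shift (shift a d) c.
Proof. apply functional_extensionality; intros n; unfold shift; destruct (a n), c, d; unfold Cadd; simpl; f_equal; ring. Qed.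

Lemma ap_cl a b e : ap_regular a b -> 0 < e -> exists L, 0 < L /\ forall c, exists tau,
  Cmod (Csub tau c) < L /\ cl e a b (shift a tau) (shift b tau).
Proof.
  intros Hap He. destruct (Hap e He) as [L [HL H]]. exists L; split; auto.
  intros c. destruct (H c) as [tau [Ht [s [Hs Hn]]]]. exists tau; split; auto.
  exists s; split; auto. intros n; destruct (Hn n). unfold shift. rewrite !(Csub_sym (_ (s n))). lra.
Qed.

Lemma stepA a b e : ap_regular a b -> 0 < e -> exists L, 0 < L /\ forall c, exists r,
  Cmod r < L /\ cl e (shift a c) (shift b c) (shift a r) (shift b r).
Proof.
  intros Hap He. destruct (ap_cl a b e Hap He) as [L [HL H]]. exists L; split; auto.
  intros c. destruct (H c) as [tau [Ht Hc]]. exists (Csub c tau). split.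
  - rewrite Csub_sym; auto.
  - apply cl_sym in Hc. apply (cl_shift _ _ _ _ _ (Csub c tau)) in Hc.
    rewrite !shift_shift in Hc.
    replace (Cadd tau (Csub c tau)) with c in Hc by (destruct c, tau; unfold Cadd, Csub; simpl; f_equal; ring).
    exact Hc.
Qed.

Definition inf (S : nat -> Prop) : Prop := forall N, exists k, (N <= k)%nat /\ S k.

Lemma pig1 (n : nat) : forall (A e : R) (S : nat -> Prop) (x : nat -> R), 0 <= e -> inf S ->
  (forall k, S k -> A <= x k <= A + INR n * e) ->
  exists p, inf (fun k => S k /\ p <= x k <= p + e).
Proof.
  induction n as [|n IH]; intros A e S x He HS Hx.
  - exists A. intros N. destruct (HS N) as [k [Hk Sk]]. exists k; split; auto. split; auto.
    specialize (Hx k Sk). simpl in Hx. lra.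
  - destruct (classic (inf (fun k => S k /\ A <= x k <= A + e))) as [Hi|Hni].
    + exists A; auto.
    + unfold inf in Hni. apply not_all_ex_not in Hni. destruct Hni as [N HN].
      destruct (IH (A + e) e (fun k => S k /\ (N <= k)%nat) x He) as [p Hp].
      * intros M. destruct (HS (Nat.max M N)) as [k [Hk Sk]]. exists k; split; [lia|split; auto; lia].
      * intros k [Sk Nk]. specialize (Hx k Sk). rewrite S_INR in Hx.
        assert (~ (x k <= A + e)). { intros Hle. apply HN. exists k; repeat split; auto; lra. }
        lra.
      * exists p. intros M. destruct (Hp M) as [k [Hk [[Sk _] Hk2]]]. exists k; auto.
Qed.

Lemma pig1b (L e : R) (S : nat -> Prop) (x : nat -> R) : 0 < e -> inf S ->
  (forall k, S k -> Rabs (x k) <= L) ->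
  exists p, inf (fun k => S k /\ Rabs (x k - p) <= e).
Proof.
  intros He HS Hx. destruct (INR_unbounded (2 * L / e)) as [n Hn].
  assert (Hne : INR n * e > 2 * L).
  { apply (Rmult_gt_compat_r e) in Hn; auto. unfold Rdiv in Hn. rewrite Rmult_assoc, Rinv_l in Hn; lra. }
  destruct (pig1 n (-L) e S x) as [p Hp]; auto. lra.
  - intros k Sk. specialize (Hx k Sk). unfold Rabs in Hx; destruct (Rcase_abs (x k)); lra.
  - exists p. intros M. destruct (Hp M) as [k [Hk [Sk Hk2]]]. exists k; split; auto. split; auto.
    apply Rabs_le. lra.
Qed.

Lemma pig2 (L e : R) (S : nat -> Prop) (r : nat -> Cpx) : 0 < e -> inf S ->
  (forall k, S k -> Cmod (r k) <= L) ->
  exists p, inf (fun k => S k /\ Cmod (Csub (r k) p) <= 2 * e).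
Proof.
  intros He HS Hr.
  destruct (pig1b L e S (fun k => fst (r k))) as [p1 Hp1]; auto.
  { intros k Sk. eapply Rle_trans. apply Cmod_fst. auto. }
  destruct (pig1b L e _ (fun k => snd (r k)) He Hp1) as [p2 Hp2].
  { intros k [Sk _]. eapply Rle_trans. apply Cmod_snd. auto. }
  exists (p1, p2). intros M. destruct (Hp2 M) as [k [Hk [[Sk H1] H2]]]. exists k; split; auto. split; auto.
  eapply Rle_trans. apply Cmod_le_sum. destruct (r k). unfold Csub; simpl in *. lra.
Qed.

Lemma level a b (h : nat -> Cpx) e : ap_regular a b -> 0 < e -> forall S, inf S ->
  exists S' p, inf S' /\ (forall k, S' k -> S k) /\
   forall k, S' k -> cl e (shift a (h k)) (shift b (h k)) (shift a p) (shift b p).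
Proof.
  intros Hap He S HS.
  destruct (stepA a b (e/2) Hap) as [L [HL H]]. lra.
  set (r := fun k => proj1_sig (constructive_indefinite_description _ (H (h k)))).
  assert (Hr : forall k, Cmod (r k) < L /\ cl (e/2) (shift a (h k)) (shift b (h k)) (shift a (r k)) (shift b (r k))).
  { intros k. unfold r. destruct (constructive_indefinite_description _ _); simpl; auto. }
  destruct (pig2 L (e/4) S r) as [p Hp]; auto. lra.
  { intros k _. destruct (Hr k); lra. }
  exists (fun k => S k /\ Cmod (Csub (r k) p) <= 2 * (e/4)), p. split; auto. split.
  - intros k [Sk _]; auto.
  - intros k [Sk Hk]. apply (cl_mono (e/2 + e/2)). lra.
    eapply cl_trans. apply Hr. eapply cl_mono; [|apply cl_shift2]. lra.
Qed.

Definition ee (m : nat) : R := (/2)^m.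

Lemma ee_pos m : 0 < ee m.
Proof. unfold ee. apply pow_lt. lra. Qed.

Lemma ee_S m : ee (S m) = ee m / 2.
Proof. unfold ee. simpl. lra. Qed.

Lemma ee_mono m k : (m <= k)%nat -> ee k <= ee m.
Proof. induction 1. lra. rewrite ee_S. pose proof (ee_pos m0). lra. Qed.

Lemma ee_small d : 0 < d -> exists m, ee m <= d.
Proof.
  intros Hd. destruct (pow_lt_1_zero (/2)) with (y := d) as [N HN]; auto.
  rewrite Rabs_right; lra. exists N. specialize (HN N (le_n _)). rewrite Rabs_right in HN.
  unfold ee; lra. apply Rle_ge, pow_le. lra.
Qed.

Definition Fam := {S : nat -> Prop | inf S}.

Lemma level_ex a b h (Hap : ap_regular a b) (m : nat) (F : Fam) :
  {x : Fam * Cpx | (forall k, proj1_sig (fst x) k -> proj1_sig F k) /\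
     forall k, proj1_sig (fst x) k -> cl (ee m) (shift a (h k)) (shift b (h k)) (shift a (snd x)) (shift b (snd x))}.
Proof.
  apply constructive_indefinite_description.
  destruct (level a b h (ee m) Hap (ee_pos m) (proj1_sig F) (proj2_sig F)) as [S' [p [H1 [H2 H3]]]].
  exists (exist _ S' H1, p). simpl. auto.
Qed.

Lemma inf_all : inf (fun _ => True).
Proof. intros N; exists N; auto. Qed.

Fixpoint Qs a b h (Hap : ap_regular a b) (m : nat) : Fam * Cpx :=
  match m with
  | O => proj1_sig (level_ex a b h Hap O (exist _ _ inf_all))
  | S m' => proj1_sig (level_ex a b h Hap (S m') (fst (Qs a b h Hap m')))
  end.

Definition pick (F : Fam) (N : nat) : nat :=
  proj1_sig (constructive_indefinite_description _ (proj2_sig F N)).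

Lemma pick_spec F N : (N <= pick F N)%nat /\ proj1_sig F (pick F N).
Proof. unfold pick. destruct (constructive_indefinite_description _ _); simpl; auto. Qed.

Fixpoint phis a b h Hap (m : nat) : nat :=
  match m with
  | O => pick (fst (Qs a b h Hap O)) O
  | S m' => pick (fst (Qs a b h Hap (S m'))) (S (phis a b h Hap m'))
  end.

Lemma cauchy_part a b h : ap_regular a b -> exists (phi : nat -> nat) (p : nat -> Cpx),
  strictly_increasing phi /\ forall m k, (m <= k)%nat ->
   cl (ee m) (shift a (h (phi k))) (shift b (h (phi k))) (shift a (p m)) (shift b (p m)).
Proof.
  intros Hap. exists (phis a b h Hap), (fun m => snd (Qs a b h Hap m)).
  set (Q := Qs a b h Hap). set (phi := phis a b h Hap).
  assert (Hnest : forall m k, (m <= k)%nat -> forall j, proj1_sig (fst (Q k)) j -> proj1_sig (fst (Q m)) j).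
  { intros m k Hmk. induction Hmk; auto. intros j Hj. apply IHHmk.
    unfold Q in Hj; simpl in Hj. destruct (level_ex _ _ _ _ _ _) as [x [Hx1 Hx2]]. simpl in Hj. auto. }
  assert (Hcl : forall m j, proj1_sig (fst (Q m)) j ->
     cl (ee m) (shift a (h j)) (shift b (h j)) (shift a (snd (Q m))) (shift b (snd (Q m)))).
  { intros m j. unfold Q. destruct m; simpl; destruct (level_ex _ _ _ _ _ _) as [x [Hx1 Hx2]]; simpl; auto. }
  assert (Hin : forall k, proj1_sig (fst (Q k)) (phi k)).
  { intros k; destruct k; simpl; apply pick_spec. }
  assert (Hlt : forall k, (phi k < phi (S k))%nat).
  { intros k. change (phi (S k)) with (pick (fst (Q (S k))) (S (phi k))).
    destruct (pick_spec (fst (Q (S k))) (S (phi k))). lia. }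
  split.
  - intros i j Hij. induction Hij. apply Hlt. specialize (Hlt m). lia.
  - intros m k Hmk. apply Hcl. apply (Hnest m k Hmk). apply Hin.
Qed.

Lemma geo_lim (x : nat -> R) c : (forall m, Rabs (x (S m) - x m) <= c * ee m) ->
  exists l, forall m, Rabs (x m - l) <= 2 * c * ee m.
Proof.
  intros H.
  assert (Hc : 0 <= c). { specialize (H O). unfold ee in H; simpl in H. pose proof (Rabs_pos (x 1%nat - x 0%nat)). lra. }
  assert (Hj : forall j m, Rabs (x (j+m)%nat - x m) <= 2*c*ee m - 2*c*ee (j+m)).
  { induction j; intros m. simpl. replace (x m - x m) with 0 by ring. rewrite Rabs_R0. lra.
    replace (S j + m)%nat with (S (j+m)) by lia.
    replace (x (S (j+m)) - x m) with ((x (S (j+m)) - x (j+m)%nat) + (x (j+m)%nat - x m)) by ring.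
    eapply Rle_trans. apply Rabs_triang. specialize (H (j+m)%nat). specialize (IHj m).
    rewrite ee_S. lra. }
  assert (Hj' : forall j m, Rabs (x (j+m)%nat - x m) <= 2*c*ee m).
  { intros j m. pose proof (Hj j m). pose proof (ee_pos (j+m)). nra. }
  assert (Hcau : Cauchy_crit x).
  { intros eps Heps. destruct (ee_small (eps / (2*c+1))) as [N HN].
    apply Rdiv_lt_0_compat; lra.
    exists N. intros n m Hn Hm. unfold Rdist.
    assert (2 * c * ee N < eps).
    { apply (Rmult_le_compat_l (2*c+1)) in HN; [|lra].
      replace ((2*c+1) * (eps / (2*c+1))) with eps in HN by (field; lra).
      pose proof (ee_pos N). nra. }
    destruct (Nat.le_ge_cases n m).
    - replace m with ((m-n)+n)%nat by lia. rewrite Rabs_minus_sym.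
      pose proof (Hj' (m-n)%nat n). pose proof (ee_mono N n Hn). nra.
    - replace n with ((n-m)+m)%nat by lia.
      pose proof (Hj' (n-m)%nat m). pose proof (ee_mono N m Hm). nra. }
  destruct (R_complete x Hcau) as [l Hl]. exists l. intros m.
  destruct (Rle_dec (Rabs (x m - l)) (2*c*ee m)) as [|Hn]; auto. exfalso.
  destruct (Hl (Rabs (x m - l) - 2*c*ee m)) as [N HN]. lra.
  specialize (HN (N+m)%nat ltac:(lia)). unfold Rdist in HN.
  pose proof (Hj' N m).
  replace (x m - l) with ((x m - x (N+m)%nat) + (x (N+m)%nat - l)) in Hn, HN by ring.
  pose proof (Rabs_triang (x m - x (N+m)%nat) (x (N+m)%nat - l)).
  rewrite Rabs_minus_sym in H0. lra.
Qed.

Lemma geo_limC (x : nat -> Cpx) c : (forall m, Cmod (Csub (x (S m)) (x m)) <= c * ee m) ->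
  exists l, forall m, Cmod (Csub (x m) l) <= 4 * c * ee m.
Proof.
  intros H.
  destruct (geo_lim (fun m => fst (x m)) c) as [l1 H1].
  { intros m. eapply Rle_trans; [|apply H]. pose proof (Cmod_fst (Csub (x (S m)) (x m))). destruct (x (S m)), (x m); simpl in *; lra. }
  destruct (geo_lim (fun m => snd (x m)) c) as [l2 H2].
  { intros m. eapply Rle_trans; [|apply H]. pose proof (Cmod_snd (Csub (x (S m)) (x m))). destruct (x (S m)), (x m); simpl in *; lra. }
  exists (l1, l2). intros m. eapply Rle_trans. apply Cmod_le_sum.
  specialize (H1 m); specialize (H2 m). destruct (x m); simpl in *. lra.
Qed.

Lemma nfa_close a x c D : no_finite_accum a ->
  (forall n, Cmod (Csub (Cadd (a n) c) (x n)) <= D) -> no_finite_accum x.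
Proof.
  intros Ha Hx M. destruct (Ha (M + Cmod c + D)) as [N HN]. exists N. intros n Hn.
  specialize (HN n Hn). specialize (Hx n).
  assert (E : a n = Cadd (Cadd (Csub (Cadd (a n) c) (x n)) (x n)) (Csub (0,0) c)).
  { destruct (a n), (x n), c; unfold Cadd, Csub; simpl; f_equal; ring. }
  assert (Ec : Cmod (Csub (0,0) c) = Cmod c).
  { rewrite Csub_sym. f_equal. destruct c; unfold Csub; simpl; f_equal; ring. }
  rewrite E in HN. pose proof (Cmod_tri (Cadd (Csub (Cadd (a n) c) (x n)) (x n)) (Csub (0,0) c)).
  pose proof (Cmod_tri (Csub (Cadd (a n) c) (x n)) (x n)). lra.
Qed.

Theorem mainTheorem10 (a b : nat -> Cpx) :
  divisor a b -> ap_regular a b ->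
  forall h : nat -> Cpx,
    exists (phi : nat -> nat) (at_ bt : nat -> Cpx) (sigma : nat -> nat -> nat),
      strictly_increasing phi /\
      divisor at_ bt /\ ap_regular at_ bt /\
      (forall k : nat, bijN (sigma k)) /\
      (forall eps : R, 0 < eps -> exists K : nat, forall k : nat, (K <= k)%nat ->
         forall n : nat,
           Cmod (Csub (Cadd (a (sigma k n)) (h (phi k))) (at_ n)) <= eps /\
           Cmod (Csub (Cadd (b (sigma k n)) (h (phi k))) (bt n)) <= eps).
Proof.
  intros [Hda Hdb] Hap h.
  destruct (cauchy_part a b h Hap) as [phi [p [Hphi Hcl]]].
  assert (Hcons : forall m, cl (2 * ee m) (shift a (p (S m))) (shift b (p (S m))) (shift a (p m)) (shift b (p m))).
  { intros m. apply (cl_mono (ee (S m) + ee m)). rewrite ee_S; pose proof (ee_pos m); lra.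
    eapply cl_trans. apply cl_sym. apply Hcl; auto. apply Hcl; auto. }
  set (tau := fun m => proj1_sig (constructive_indefinite_description _ (Hcons m))).
  assert (Htau : forall m, bijN (tau m) /\ forall n,
     Cmod (Csub (shift a (p (S m)) (tau m n)) (shift a (p m) n)) <= 2 * ee m /\
     Cmod (Csub (shift b (p (S m)) (tau m n)) (shift b (p m) n)) <= 2 * ee m).
  { intros m. unfold tau. destruct (constructive_indefinite_description _ _); simpl; auto. }
  set (pi := fix pi (m : nat) : nat -> nat := match m with O => fun n => n | S m' => fun n => tau m' (pi m' n) end).
  assert (Hpi : forall m, bijN (pi m)).
  { induction m. apply bij_id. apply (bij_comp (tau m) (pi m)); auto. apply Htau. }
  assert (Hla : forall n, exists l, forall m, Cmod (Csub (shift a (p m) (pi m n)) l) <= 4 * 2 * ee m).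
  { intros n. apply (geo_limC (fun m => shift a (p m) (pi m n))). intros m. apply Htau. }
  assert (Hlb : forall n, exists l, forall m, Cmod (Csub (shift b (p m) (pi m n)) l) <= 4 * 2 * ee m).
  { intros n. apply (geo_limC (fun m => shift b (p m) (pi m n))). intros m. apply Htau. }
  set (at_ := fun n => proj1_sig (constructive_indefinite_description _ (Hla n))).
  set (bt := fun n => proj1_sig (constructive_indefinite_description _ (Hlb n))).
  assert (Hfin : forall m, cl (8 * ee m) (shift a (p m)) (shift b (p m)) at_ bt).
  { intros m. exists (pi m). split; auto. intros n. unfold at_, bt.
    destruct (constructive_indefinite_description _ (Hla n)) as [l1 H1].
    destruct (constructive_indefinite_description _ (Hlb n)) as [l2 H2]. simpl.
    specialize (H1 m); specialize (H2 m). split; lra. }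
  assert (Hk : forall k, cl (9 * ee k) (shift a (h (phi k))) (shift b (h (phi k))) at_ bt).
  { intros k. apply (cl_mono (ee k + 8 * ee k)). lra. eapply cl_trans. apply Hcl; auto. apply Hfin. }
  set (sigma := fun k => proj1_sig (constructive_indefinite_description _ (Hk k))).
  assert (Hsig : forall k, bijN (sigma k) /\ forall n,
     Cmod (Csub (shift a (h (phi k)) (sigma k n)) (at_ n)) <= 9 * ee k /\
     Cmod (Csub (shift b (h (phi k)) (sigma k n)) (bt n)) <= 9 * ee k).
  { intros k. unfold sigma. destruct (constructive_indefinite_description _ _); simpl; auto. }
  exists phi, at_, bt, sigma. split; [auto|split; [|split; [|split]]].
  - destruct (Hfin O) as [s0 [_ H0]]. split.
    + apply (nfa_close a at_ (p O) 8 Hda). intros n.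
      unfold at_. destruct (constructive_indefinite_description _ (Hla n)) as [l1 H1]. simpl.
      specialize (H1 O). unfold ee in H1; simpl in H1. unfold shift in H1. lra.
    + apply (nfa_close b bt (p O) 8 Hdb). intros n.
      unfold bt. destruct (constructive_indefinite_description _ (Hlb n)) as [l1 H1]. simpl.
      specialize (H1 O). unfold ee in H1; simpl in H1. unfold shift in H1. lra.
  - intros eps Heps.
    destruct (ap_cl a b (eps/4) Hap) as [L [HL H]]. lra.
    destruct (ee_small (eps/32)) as [m Hm]. lra.
    exists L; split; auto. intros c. destruct (H c) as [t [Ht Hc]]. exists t; split; auto.
    assert (C1 := cl_sym _ _ _ _ _ (Hfin m)).
    assert (C2 := cl_shift _ _ _ _ _ (p m) Hc). rewrite !(shift_comm _ t (p m)) in C2.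
    assert (C3 := cl_shift _ _ _ _ _ t (Hfin m)).
    destruct (cl_trans _ _ _ _ _ _ _ _ (cl_trans _ _ _ _ _ _ _ _ C1 C2) C3) as [s [Hs Hn]].
    exists s; split; auto. intros n. destruct (Hn n). unfold shift in *.
    rewrite !(Csub_sym (Cadd _ t)). split; lra.
  - intros k; apply Hsig.
  - intros eps Heps. destruct (ee_small (eps/9)) as [K HK]. lra.
    exists K. intros k Hk' n. destruct (Hsig k) as [_ Hn]. destruct (Hn n).
    pose proof (ee_mono K k Hk'). unfold shift in *. split; lra.
Qed.
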